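(* Let $S$ be a finite inverse semigroup. Then a $\mathscr J$-class $J$ of $S$ is $\mathsf{RM}$-irreducible if and only if all its elements are join irreducible in the natural partial order on $S$. Moreover, for a $\mathscr J$-class $J$ with idempotent $e_J\in J$ and maximal subgroup $G_J$ at $e_J$, we have $M_J=\{g\in G_J\mid \text{for all } f\in S,\ f<e_J\implies f<g\}$.
   Context: In an inverse semigroup every $\mathscr J$-class is regular; $\mathscr J$-classes are ordered by $J'\le J$ iff $S^1J'S^1\subseteq S^1JS^1$. For a $\mathscr J$-class $J$: $s\equiv_{\mathsf{RM},J}t$ iff for all $x\in J$, $xs\in J\iff xt\in J$, and if both lie in $J$ then $xs=xt$. $J$ is $\mathsf{RM}$-irreducible if $\bigcap_{J'<J}\equiv_{\mathsf{RM},J'}\not\subseteq\equiv_{\mathsf{RM},J}$ (the empty intersection is the universal relation). $M_J=\{g\in G_J\mid g\equiv_{\mathsf{RM},J'}e_J\text{ for all } J'<J\}$. The natural partial order is $s\le t$ iff $s=et$ for some idempotent $e$. An element $s$ is join reducible if it is the least upper bound in the natural partial order of some set of elements strictly below it (the least upper bound of the empty set being a minimum element of $S$, if one exists), and join irreducible otherwise. *)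

(* Defs.v *)
From mathcomp Require Import all_boot.
Set Implicit Arguments. Unset Strict Implicit. Unset Printing Implicit Defensive.

Section InvSemigroup.
Variables (T : finType) (mul : T -> T -> T).

Definition inverse_semigroup : Prop :=
  forall s : T, exists! t : T, mul (mul s t) s = s /\ mul (mul t s) t = t.

Definition idempotent_el (e : T) : Prop := mul e e = e.

(* x \in S^1 s S^1 *)
Definition in_ideal (s x : T) : Prop :=
  x = s \/ (exists y, x = mul y s) \/ (exists y, x = mul s y) \/
  (exists y z, x = mul (mul y s) z).
Definition in_rideal (s x : T) : Prop := x = s \/ exists y, x = mul s y.
Definition in_lideal (s x : T) : Prop := x = s \/ exists y, x = mul y s.

Definition Jrel (s t : T) : Prop := forall x, in_ideal s x <-> in_ideal t x.
Definition Rrel (s t : T) : Prop := forall x, in_rideal s x <-> in_rideal t x.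
Definition Lrel (s t : T) : Prop := forall x, in_lideal s x <-> in_lideal t x.
Definition Hrel (s t : T) : Prop := Rrel s t /\ Lrel s t.

Definition Jclass (J : {set T}) : Prop :=
  exists s, forall t, t \in J <-> Jrel s t.

Definition in_set_ideal (A : {set T}) (x : T) : Prop :=
  exists2 a, a \in A & in_ideal a x.

Definition Jle (J' J : {set T}) : Prop :=
  forall x, in_set_ideal J' x -> in_set_ideal J x.
Definition Jlt (J' J : {set T}) : Prop := Jle J' J /\ J' <> J.

Definition rm_equiv (J : {set T}) (s t : T) : Prop :=
  forall x, x \in J ->
    (mul x s \in J <-> mul x t \in J) /\
    (mul x s \in J -> mul x t \in J -> mul x s = mul x t).

Definition RM_irreducible (J : {set T}) : Prop :=
  ~ (forall s t : T,
       (forall J', Jclass J' -> Jlt J' J -> rm_equiv J' s t) ->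
       rm_equiv J s t).

Definition nle (s t : T) : Prop := exists e, idempotent_el e /\ s = mul e t.
Definition nlt (s t : T) : Prop := nle s t /\ s <> t.

Definition is_lub (X : {set T}) (s : T) : Prop :=
  (forall x, x \in X -> nle x s) /\
  (forall u, (forall x, x \in X -> nle x u) -> nle s u).

Definition join_reducible (s : T) : Prop :=
  exists X : {set T}, (forall x, x \in X -> nlt x s) /\ is_lub X s.
Definition join_irreducible (s : T) : Prop := ~ join_reducible s.

(* g \in M_J, where e is the idempotent of J and G_J = H-class of e *)
Definition in_MJ (J : {set T}) (e g : T) : Prop :=
  Hrel g e /\ forall J', Jclass J' -> Jlt J' J -> rm_equiv J' g e.

End InvSemigroup.

(* Main.v *)
Require Import Defs.
From mathcomp Require Import all_boot.
Set Implicit Arguments. Unset Strict Implicit. Unset Printing Implicit Defensive.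

Section Pf.
Variables (T : finType) (mul : T -> T -> T).
Hypothesis mulA : associative mul.
Hypothesis hinv : inverse_semigroup mul.
Local Notation "x ⋅ y" := (mul x y) (at level 40, left associativity).

Definition isinv (s t : T) := (s ⋅ t ⋅ s == s) && (t ⋅ s ⋅ t == t).
Definition inv (s : T) : T := odflt s [pick t | isinv s t].

Lemma inv_spec s : s ⋅ inv s ⋅ s = s /\ inv s ⋅ s ⋅ inv s = inv s.
Proof.
rewrite /inv; case: pickP => [t /andP[/eqP -> /eqP ->] //|H].
have [t [[h1 h2] _]] := hinv s.
by move: (H t); rewrite /isinv h1 h2 !eqxx.
Qed.

Lemma inv_uniq s t : s ⋅ t ⋅ s = s -> t ⋅ s ⋅ t = t -> t = inv s.
Proof.
move=> h1 h2; have [u [_ hu]] := hinv s.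
have [i1 i2] := inv_spec s.
by rewrite -(hu t (conj h1 h2)) -(hu (inv s) (conj i1 i2)).
Qed.

Lemma regl s : s ⋅ inv s ⋅ s = s. Proof. by case: (inv_spec s). Qed.
Lemma regr s : inv s ⋅ s ⋅ inv s = inv s. Proof. by case: (inv_spec s). Qed.

Lemma ext2 a b c : a ⋅ b = c -> forall x, x ⋅ a ⋅ b = x ⋅ c.
Proof. by move=> h x; rewrite -mulA h. Qed.
Lemma ext3 a b c d : a ⋅ b ⋅ c = d -> forall x, x ⋅ a ⋅ b ⋅ c = x ⋅ d.
Proof. by move=> h x; rewrite -!mulA [a ⋅ _]mulA h. Qed.

Lemma inv_inv s : inv (inv s) = s.
Proof. by symmetry; apply: inv_uniq; [apply: regr| apply: regl]. Qed.

Local Notation idem := (idempotent_el mul).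

Lemma inv_idem e : idem e -> inv e = e.
Proof. by move=> h; symmetry; apply: inv_uniq; rewrite !h. Qed.

Ltac AC := by rewrite !mulA.

Lemma idem_mul e f : idem e -> idem f -> idem (e ⋅ f).
Proof.
move=> he hf; have r1 := regl (e ⋅ f); have r2 := regr (e ⋅ f).
move: (inv (e ⋅ f)) r1 r2 (@inv_uniq (e ⋅ f)) => x r1 r2 U.
have hx : f ⋅ x ⋅ e = x.
  apply: U.
  - rewrite !mulA (ext2 hf) (ext2 he).
    by rewrite -mulA r1.
  - rewrite !mulA (ext2 hf) (ext2 he).
    transitivity (f ⋅ (x ⋅ (e ⋅ f) ⋅ x) ⋅ e); first AC.
    by rewrite r2.
have hxx : idem x.
  rewrite /idem -{1}hx -{2}hx.
  transitivity (f ⋅ (x ⋅ (e ⋅ f) ⋅ x) ⋅ e); first AC.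
  by rewrite r2.
have : inv x = e ⋅ f by symmetry; apply: inv_uniq; rewrite ?r1 ?r2.
by rewrite inv_idem // => <-.
Qed.

Lemma idem_comm e f : idem e -> idem f -> e ⋅ f = f ⋅ e.
Proof.
move=> he hf; symmetry; rewrite -(inv_idem (idem_mul he hf)); apply: inv_uniq.
- transitivity (e ⋅ (f ⋅ f) ⋅ (e ⋅ e) ⋅ f); first AC.
  rewrite he hf; transitivity ((e ⋅ f) ⋅ (e ⋅ f)); first AC.
  exact: idem_mul.
- transitivity (f ⋅ (e ⋅ e) ⋅ (f ⋅ f) ⋅ e); first AC.
  rewrite he hf; transitivity ((f ⋅ e) ⋅ (f ⋅ e)); first AC.
  exact: idem_mul.
Qed.

Lemma idem_r s : idem (s ⋅ inv s).
Proof. by rewrite /idem mulA regl. Qed.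
Lemma idem_l s : idem (inv s ⋅ s).
Proof. by rewrite /idem mulA regr. Qed.

Lemma inv_mul s t : inv (s ⋅ t) = inv t ⋅ inv s.
Proof.
symmetry; apply: inv_uniq.
- transitivity (s ⋅ ((t ⋅ inv t) ⋅ (inv s ⋅ s)) ⋅ t); first AC.
  rewrite (idem_comm (idem_r t) (idem_l s)).
  transitivity ((s ⋅ inv s ⋅ s) ⋅ (t ⋅ inv t ⋅ t)); first AC.
  by rewrite !regl.
- transitivity (inv t ⋅ ((inv s ⋅ s) ⋅ (t ⋅ inv t)) ⋅ inv s); first AC.
  rewrite (idem_comm (idem_l s) (idem_r t)).
  transitivity ((inv t ⋅ t ⋅ inv t) ⋅ (inv s ⋅ s ⋅ inv s)); first AC.
  by rewrite !regr.
Qed.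

Lemma nle_char s t : nle mul s t <-> s = s ⋅ inv s ⋅ t.
Proof.
split; last by move=> h; exists (s ⋅ inv s); split => //; exact: idem_r.
case=> e [he ->]; rewrite inv_mul (inv_idem he).
symmetry; transitivity (e ⋅ ((t ⋅ inv t) ⋅ e) ⋅ t); first AC.
rewrite (idem_comm (idem_r t) he).
transitivity (e ⋅ e ⋅ (t ⋅ inv t ⋅ t)); first AC.
by rewrite regl he.
Qed.

Lemma nle_r s t j : idem j -> s = t ⋅ j -> nle mul s t.
Proof.
move=> hj ->; apply/nle_char; rewrite inv_mul (inv_idem hj).
transitivity (t ⋅ ((j ⋅ j) ⋅ (inv t ⋅ t))); last AC.
by rewrite hj (idem_comm hj (idem_l t)) !mulA regl.
Qed.

Lemma nle_rinv s t : nle mul s t -> s = t ⋅ (inv s ⋅ s).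
Proof.
case=> e [he ->]; rewrite inv_mul (inv_idem he).
transitivity ((t ⋅ inv t) ⋅ (e ⋅ e) ⋅ t); last AC.
rewrite he (idem_comm (idem_r t) he).
transitivity (e ⋅ (t ⋅ inv t ⋅ t)); last AC.
by rewrite regl.
Qed.

Lemma nle_idemP f e : idem f -> (nle mul f e <-> f = f ⋅ e).
Proof.
move=> hf; split; first by move/nle_char; rewrite (inv_idem hf) hf.
by move=> h; apply/nle_char; rewrite (inv_idem hf) hf.
Qed.

Lemma nle_idem f e : idem e -> nle mul f e -> idem f.
Proof. by move=> he [j [hj ->]]; apply: idem_mul. Qed.

Lemma nle_trans x y z : nle mul x y -> nle mul y z -> nle mul x z.
Proof.
move=> [i [hi ->]] [j [hj ->]]; exists (i ⋅ j); split; first exact: idem_mul.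
by rewrite mulA.
Qed.

Lemma nle_inv x y : nle mul x y -> nle mul (inv x) (inv y).
Proof.
move=> [i [hi ->]]; apply: (nle_r hi); by rewrite inv_mul (inv_idem hi).
Qed.

Lemma eue e u : idem e -> e ⋅ u ⋅ e = e -> nle mul e u.
Proof.
move=> he h; exists e; split => //.
have h1 : nle mul e (e ⋅ u) by apply: (nle_r he); rewrite h.
move/nle_char: h1; rewrite (inv_idem he) he mulA he; done.
Qed.


Definition IS (s x : T) := exists a b, x = a ⋅ s ⋅ b.

Lemma IS_in s x : in_ideal mul s x -> IS s x.
Proof.
case=> [->|[[y ->]|[[y ->]|[y [z ->]]]]].
- by exists (s ⋅ inv s), (inv s ⋅ s); rewrite !mulA !regl.
- by exists y, (inv (y ⋅ s) ⋅ (y ⋅ s)); rewrite mulA regl.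
- by exists (s ⋅ y ⋅ inv (s ⋅ y)), y; rewrite -mulA regl.
- by exists y, z.
Qed.

Lemma in_IS s x : IS s x -> in_ideal mul s x.
Proof. by move=> h; right; right; right. Qed.

Lemma IS_refl s : IS s s.
Proof. by apply: IS_in; left. Qed.

Lemma IS_trans s t x : IS s t -> IS t x -> IS s x.
Proof. by move=> [a [b ->]] [c [d ->]]; exists (c ⋅ a), (b ⋅ d); rewrite !mulA. Qed.

Lemma IS_l s y : IS s (y ⋅ s).
Proof. by apply: IS_in; right; left; exists y. Qed.
Lemma IS_r s y : IS s (s ⋅ y).
Proof. by apply: IS_in; right; right; left; exists y. Qed.

Lemma Jrel_IS s t : Jrel mul s t <-> IS s t /\ IS t s.
Proof.
split.
- move=> h; split; apply: IS_in; [apply/(h t); left | apply/(h s); left]; done.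
- move=> [h1 h2] x; split => /IS_in h; apply: in_IS; apply: IS_trans h; done.
Qed.

Lemma Jrel_sym s t : Jrel mul s t -> Jrel mul t s.
Proof. by move=> h x; split => /h. Qed.
Lemma Jrel_trans s t u : Jrel mul s t -> Jrel mul t u -> Jrel mul s u.
Proof. by move=> h1 h2 x; split => [/h1/h2|/h2/h1]. Qed.

Lemma class_mem J t u : Jclass mul J -> t \in J -> (u \in J <-> Jrel mul t u).
Proof.
move=> [s0 hs] /hs ht; split => h.
- exact: Jrel_trans (Jrel_sym ht) (proj1 (hs u) h).
- exact/hs/(Jrel_trans ht h).
Qed.

Lemma class_eq A B a : Jclass mul A -> Jclass mul B -> a \in A -> a \in B -> A = B.
Proof.
move=> hA hB ha hb; apply/setP => x; apply/idP/idP => hx.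
- by apply/(class_mem _ hB hb); apply/(class_mem _ hA ha).
- by apply/(class_mem _ hA ha); apply/(class_mem _ hB hb).
Qed.

Definition ISb s x := [exists a, exists b, x == a ⋅ s ⋅ b].
Lemma ISP s x : reflect (IS s x) (ISb s x).
Proof.
apply: (iffP existsP) => [[a /existsP [b /eqP ->]] | [a [b ->]]]; first by exists a, b.
by exists a; apply/existsP; exists b.
Qed.

Definition Jcl f := [set t | ISb f t && ISb t f].
Lemma Jcl_mem f t : t \in Jcl f <-> Jrel mul f t.
Proof.
rewrite inE; split => [/andP[/ISP ? /ISP ?] | /Jrel_IS [/ISP ? /ISP ?]].
  exact/Jrel_IS.
by apply/andP.
Qed.
Lemma Jcl_class f : Jclass mul (Jcl f).
Proof. by exists f => t; apply: Jcl_mem. Qed.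
Lemma Jcl_self f : f \in Jcl f.
Proof. by apply/Jcl_mem => x. Qed.

Lemma stab e f : idem e -> idem f -> f = f ⋅ e -> IS f e -> f = e.
Proof.
move=> he hf hfe [a [b hab]].
have hef : e ⋅ f = f by rewrite (idem_comm he hf) -hfe.
have sub1 : mul f @: setT \subset mul e @: setT.
  apply/subsetP => _ /imsetP [t _ ->]; apply/imsetP; exists (f ⋅ t) => //.
  by rewrite mulA hef.
have sub2 : mul e @: setT \subset mul a @: (mul f @: setT).
  apply/subsetP => _ /imsetP [t _ ->]; apply/imsetP; exists (f ⋅ (b ⋅ t)).
    by apply: imset_f.
  by rewrite {1}hab !mulA.
have card : #|mul e @: setT| <= #|mul f @: setT|.
  exact: leq_trans (subset_leq_card sub2) (leq_imset_card _ _).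
have eq : mul f @: setT = mul e @: setT.
  by apply/eqP; rewrite eqEcard sub1 card.
have : e \in mul f @: setT by rewrite eq; apply/imsetP; exists e.
case/imsetP => t _ ht.
by rewrite hfe {1}ht mulA hf -ht.
Qed.


Lemma lower_class J e f : Jclass mul J -> e \in J -> idem e -> idem f ->
  f = f ⋅ e -> f <> e -> Jlt mul (Jcl f) J.
Proof.
move=> hJ heJ he hf hfe hne; split.
- move=> x [a /Jcl_mem /Jrel_IS [hfa _] /IS_in hax]; exists e => //.
  apply: in_IS; apply: IS_trans (IS_trans hfa hax).
  by exists f, f; rewrite -hfe hf.
- move=> heq; have hfJ : f \in J by rewrite -heq Jcl_self.
  move/(class_mem _ hJ heJ)/Jrel_IS: hfJ => [_ hIS].
  by apply: hne; apply: stab.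
Qed.

Lemma not_top J J' x e : Jclass mul J -> Jclass mul J' -> Jlt mul J' J ->
  x \in J' -> e \in J -> idem e -> e ⋅ inv x ⋅ x ⋅ e <> e.
Proof.
move=> hJ hJ' [hle hne] hx heJ he h.
have h1 : IS x e by exists (e ⋅ inv x), e; rewrite h.
have [j hj /IS_in hjx] : in_set_ideal mul J x.
  by apply: hle; exists x => //; left.
have h2 : IS e x.
  move/(class_mem _ hJ heJ)/Jrel_IS: hj => [hej _]; exact: IS_trans hej hjx.
have heJ' : e \in J' by apply/(class_mem _ hJ' hx)/Jrel_IS.
by apply: hne; apply: (class_eq hJ' hJ heJ' heJ).
Qed.

Lemma lowf x e : idem e ->
  [/\ idem (e ⋅ inv x ⋅ x ⋅ e), e ⋅ inv x ⋅ x ⋅ e = e ⋅ inv x ⋅ x ⋅ e ⋅ e &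
      x ⋅ e = x ⋅ e ⋅ (e ⋅ inv x ⋅ x ⋅ e)].
Proof.
move=> he; split.
- have -> : e ⋅ inv x ⋅ x ⋅ e = e ⋅ (inv x ⋅ x) ⋅ e by AC.
  exact: idem_mul (idem_mul he (idem_l x)) he.
- by rewrite -[RHS]mulA he.
- have r := regl (x ⋅ e); rewrite inv_mul (inv_idem he) in r.
  by rewrite -{1}r !mulA.
Qed.

Lemma rm_of_eq (J : {set T}) s t : (forall x, x \in J -> x ⋅ s = x ⋅ t) -> rm_equiv mul J s t.
Proof. by move=> h x hx; rewrite (h x hx); split. Qed.

Lemma Hrel_l g e : idem e -> Hrel mul g e -> g = e ⋅ g.
Proof.
move=> he [hR _]; have := (proj1 (hR g)) (or_introl erefl).
by case=> [->|[y ->]]; rewrite ?he // mulA he.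
Qed.

Lemma Hrel_J g e : Hrel mul g e -> Jrel mul g e.
Proof.
move=> [hR _]; apply/Jrel_IS; split.
- by case: (proj2 (hR e) (or_introl erefl)) => [->|[y ->]]; [apply: IS_refl|apply: IS_r].
- by case: (proj1 (hR g) (or_introl erefl)) => [->|[y ->]]; [apply: IS_refl|apply: IS_r].
Qed.

Lemma part2 J e g : Jclass mul J -> e \in J -> idem e ->
  (in_MJ mul J e g <-> Hrel mul g e /\ forall f, nlt mul f e -> nlt mul f g).
Proof.
move=> hJ heJ he; split.
- move=> [hH hN]; split => // f [hfe hne].
  have hf := nle_idem he hfe.
  have hfe' := proj1 (nle_idemP e hf) hfe.
  have hlt := lower_class hJ heJ he hf hfe' hne.
  have [h1 h2] := hN _ (Jcl_class f) hlt f (Jcl_self f).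
  have hfe'' : f ⋅ e \in Jcl f by rewrite -hfe' Jcl_self.
  have hfg := h2 (proj2 h1 hfe'') hfe''.
  split; first by apply/(nle_idemP g hf); rewrite hfg -hfe'.
  move=> hfg'; apply: (proj2 hlt); apply: (class_eq (Jcl_class f) hJ (Jcl_self f)).
  rewrite hfg'; apply/(class_mem _ hJ heJ); apply: Jrel_sym; exact: Hrel_J.
- move=> [hH hF]; split => // J' hJ' hlt; apply: rm_of_eq => x hx.
  have [hf hfe hxe] := lowf x he.
  have hne := not_top hJ hJ' hlt hx heJ he.
  have [hfg _] := hF _ (conj (proj2 (nle_idemP e hf) hfe) hne).
  have hfg' := proj1 (nle_idemP g hf) hfg.
  by rewrite (Hrel_l he hH) mulA hxe -mulA -hfg' -hxe.
Qed.


Definition JR s := forall u, (forall y, nlt mul y s -> nle mul y u) -> nle mul s u.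

Lemma JR_of_red s : join_reducible mul s -> JR s.
Proof. by move=> [X [hX [_ hlub]]] u hu; apply: hlub => x hx; apply: hu; apply: hX. Qed.

Lemma nle_rr y s : nle mul y s -> nle mul (y ⋅ inv y) (s ⋅ inv s).
Proof.
move=> [i [hi ->]]; exists i; split => //.
rewrite inv_mul (inv_idem hi).
transitivity (i ⋅ ((s ⋅ inv s) ⋅ i)); first AC.
by rewrite -(idem_comm hi (idem_r s)) mulA hi.
Qed.

Lemma JR_ss s : JR s -> JR (s ⋅ inv s).
Proof.
move=> hs u hu.
have key : nle mul s (u ⋅ s).
  apply: hs => y [hys hne].
  have hp := idem_r y.
  have hy1 : y = y ⋅ inv y ⋅ s by apply/nle_char.
  have hpe := nle_rr hys.
  have hpne : y ⋅ inv y <> s ⋅ inv s.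
    by move=> h; apply: hne; rewrite hy1 h regl.
  have hpu := proj1 (nle_idemP u hp) (hu _ (conj hpe hpne)).
  exists (y ⋅ inv y); split => //.
  by rewrite {1}hy1 {1}hpu !mulA.
apply: eue; first exact: idem_r.
move/nle_char: key => key.
transitivity ((s ⋅ inv s ⋅ (u ⋅ s)) ⋅ inv s); first AC.
by rewrite -key.
Qed.

Lemma JR_conj a e e' : JR e' -> a ⋅ inv a = e -> inv a ⋅ a = e' -> JR e.
Proof.
move=> hJR hae hae'; subst e e'.
have he := idem_r a; have he' := idem_l a.
move=> u hu.
have key : nle mul (inv a ⋅ a) (inv a ⋅ u ⋅ a).
  apply: hJR => f' [hf'e' hne].
  have hf' := nle_idem he' hf'e'.
  have hf'' := proj1 (nle_idemP _ hf') hf'e'.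
  have hf3 : inv a ⋅ a ⋅ f' = f'.
    by rewrite (idem_comm he' hf') -hf''.
  have hg : idem (a ⋅ f' ⋅ inv a).
    rewrite /idempotent_el.
    transitivity (a ⋅ ((f' ⋅ (inv a ⋅ a)) ⋅ f') ⋅ inv a); first AC.
    by rewrite -hf'' hf'.
  have hge : a ⋅ f' ⋅ inv a = a ⋅ f' ⋅ inv a ⋅ (a ⋅ inv a).
    transitivity (a ⋅ (f' ⋅ (inv a ⋅ a)) ⋅ inv a); last AC.
    by rewrite -hf''.
  have hgne : a ⋅ f' ⋅ inv a <> a ⋅ inv a.
    move=> h; apply: hne.
    have : inv a ⋅ (a ⋅ f' ⋅ inv a) ⋅ a = inv a ⋅ (a ⋅ inv a) ⋅ a by rewrite h.
    have -> : inv a ⋅ (a ⋅ f' ⋅ inv a) ⋅ a = (inv a ⋅ a ⋅ f') ⋅ (inv a ⋅ a) by AC.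
    have -> : inv a ⋅ (a ⋅ inv a) ⋅ a = (inv a ⋅ a) ⋅ (inv a ⋅ a) by AC.
    by rewrite hf3 -hf'' he'.
  have hgu := proj1 (nle_idemP u hg) (hu _ (conj (proj2 (nle_idemP _ hg) hge) hgne)).
  exists f'; split => //.
  have E : inv a ⋅ (a ⋅ f' ⋅ inv a) ⋅ a = f'.
    have -> : inv a ⋅ (a ⋅ f' ⋅ inv a) ⋅ a = (inv a ⋅ a ⋅ f') ⋅ (inv a ⋅ a) by AC.
    by rewrite hf3 -hf''.
  rewrite -{1}E {1}hgu.
  transitivity ((inv a ⋅ a ⋅ f') ⋅ (inv a ⋅ u ⋅ a)); first AC.
  by rewrite hf3.
have k2 := proj1 (nle_idemP _ he') key.
have k3 : inv a ⋅ a = inv a ⋅ u ⋅ a.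
  by rewrite {1}k2 !mulA regr.
apply: eue => //.
transitivity (a ⋅ (inv a ⋅ u ⋅ a) ⋅ inv a); first AC.
by rewrite -k3 !mulA regl.
Qed.

Lemma DJ e e' : idem e -> idem e' -> IS e e' -> IS e' e ->
  exists a, a ⋅ inv a = e /\ inv a ⋅ a = e'.
Proof.
move=> he he' hee' [c [d hcd]].
have hab : e = (e ⋅ c ⋅ e') ⋅ (e' ⋅ d ⋅ e).
  transitivity (e ⋅ (c ⋅ (e' ⋅ e') ⋅ d) ⋅ e); last AC.
  by rewrite he' -hcd he he.
move: hab; set a := e ⋅ c ⋅ e'; set b := e' ⋅ d ⋅ e => hab.
have hae : a = e ⋅ a by rewrite /a !mulA he.
have hae' : a = a ⋅ e' by rewrite /a -[RHS]mulA he'.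
exists a.
have hp : a ⋅ inv a = e.
  have h1 : a ⋅ inv a = e ⋅ (a ⋅ inv a) by rewrite mulA -hae.
  have h3 : e = a ⋅ b ⋅ (inv b ⋅ inv a).
    by rewrite -inv_mul -hab (inv_idem he) he.
  have h2 : e = e ⋅ (a ⋅ inv a).
    rewrite {2}h3; symmetry.
    transitivity (a ⋅ ((b ⋅ inv b) ⋅ (inv a ⋅ a)) ⋅ inv a); first AC.
    rewrite (idem_comm (idem_r b) (idem_l a)).
    transitivity ((a ⋅ inv a ⋅ a) ⋅ (b ⋅ inv b) ⋅ inv a); first AC.
    by rewrite regl [RHS]h3 !mulA.
  by rewrite h1 -h2.
split => //.
apply: stab => //; first exact: idem_l.
- by rewrite -[RHS]mulA -hae'.
- apply: (IS_trans _ hee').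
  by exists a, (inv a); rewrite -hp mulA regl.
Qed.

Lemma JR_J J s e : Jclass mul J -> s \in J -> JR s -> e \in J -> idem e -> JR e.
Proof.
move=> hJ hs hJR heJ he.
have h1 := JR_ss hJR.
have hs' : s ⋅ inv s \in J.
  apply/(class_mem _ hJ hs)/Jrel_IS; split; first exact: IS_r.
  by rewrite -{3}(regl s); apply: IS_r.
have /Jrel_IS [h2 h3] := proj1 (class_mem _ hJ heJ) hs'.
have [a [ha1 ha2]] := DJ he (idem_r s) h2 h3.
exact: JR_conj h1 ha1 ha2.
Qed.

Lemma idem_kk y k : idem y -> idem k -> y ⋅ k ⋅ y = y ⋅ k.
Proof. by move=> hy hk; rewrite -mulA (idem_comm hk hy) mulA hy. Qed.

Lemma core J a b x : Jclass mul J -> (forall e, e \in J -> idem e -> JR e) ->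
  (forall J', Jclass mul J' -> Jlt mul J' J -> rm_equiv mul J' a b) ->
  x \in J -> x ⋅ a \in J -> x ⋅ b = x ⋅ a.
Proof.
move=> hJ hJR hN hx hxa.
have hxe : x = x ⋅ (inv x ⋅ x) by rewrite mulA regl.
have heJ : inv x ⋅ x \in J.
  apply/(class_mem _ hJ hx)/Jrel_IS; split; first exact: IS_l.
  by move: (IS_l (inv x ⋅ x) x); rewrite -hxe.
have heaJ : inv x ⋅ x ⋅ a \in J.
  apply/(class_mem _ hJ hxa)/Jrel_IS; split.
  - by rewrite -mulA; apply: IS_l.
  - by move: (IS_l (inv x ⋅ x ⋅ a) x); rewrite mulA -hxe.
have he := idem_l x.
move: (inv x ⋅ x) he hxe heJ heaJ => e he hxe heJ heaJ.
have hp0 : e ⋅ a ⋅ inv (e ⋅ a) = e.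
  apply: stab => //; first exact: idem_r.
  - by rewrite inv_mul (inv_idem he) -[RHS]mulA -[inv a ⋅ e ⋅ e]mulA he.
  - have hpJ : e ⋅ a ⋅ inv (e ⋅ a) \in J.
      apply/(class_mem _ hJ heaJ)/Jrel_IS; split; first exact: IS_r.
      by move: (IS_r (e ⋅ a ⋅ inv (e ⋅ a)) (e ⋅ a)); rewrite regl.
    by have /Jrel_IS [] := proj1 (class_mem _ hJ hpJ) heJ.
have hp : e ⋅ a ⋅ (inv a ⋅ e) = e by move: hp0; rewrite inv_mul (inv_idem he).
have hfa : forall f, idem f -> f = f ⋅ e -> f ⋅ a ⋅ inv (f ⋅ a) = f.
  move=> f hf hfe.
  have hef : e ⋅ f = f by rewrite (idem_comm he hf) -hfe.
  rewrite inv_mul (inv_idem hf).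
  have -> : f ⋅ a ⋅ (inv a ⋅ f) = (f ⋅ e) ⋅ a ⋅ (inv a ⋅ (e ⋅ f)) by rewrite -hfe hef.
  have -> : (f ⋅ e) ⋅ a ⋅ (inv a ⋅ (e ⋅ f)) = f ⋅ (e ⋅ a ⋅ (inv a ⋅ e)) ⋅ f by AC.
  by rewrite hp -hfe hf.
have hf : forall f, idem f -> f = f ⋅ e -> f <> e -> f ⋅ a = f ⋅ b.
  move=> f hf hfe hne.
  have hlt := lower_class hJ heJ he hf hfe hne.
  have faJ : f ⋅ a \in Jcl f.
    apply/Jcl_mem/Jrel_IS; split; first exact: IS_r.
    by move: (IS_r (f ⋅ a) (inv (f ⋅ a))); rewrite hfa.
  have [h1 h2] := hN _ (Jcl_class f) hlt f (Jcl_self f).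
  exact: h2 faJ (proj1 h1 faJ).
have hub : nle mul e (a ⋅ inv b).
  apply: hJR => // y [hye hne].
  have hy := nle_idem he hye.
  have hye' := proj1 (nle_idemP _ hy) hye.
  have hyab := hf y hy hye' hne.
  apply/(nle_idemP _ hy).
  rewrite mulA hyab -mulA -(idem_kk hy (idem_r b)); symmetry.
  transitivity (y ⋅ b ⋅ inv (y ⋅ b)); first by rewrite inv_mul (inv_idem hy) !mulA.
  by rewrite -hyab hfa.
have heab := proj1 (nle_idemP _ he) hub.
have hsw : e ⋅ a ⋅ inv (e ⋅ b) = e.
  rewrite inv_mul (inv_idem he).
  transitivity ((e ⋅ (a ⋅ inv b)) ⋅ e); first AC.
  by rewrite -heab he.
have hsi : inv (e ⋅ a) = inv (e ⋅ a) ⋅ (e ⋅ a) ⋅ inv (e ⋅ b).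
  by rewrite -mulA hsw inv_mul (inv_idem he) -mulA he.
have h1 : nle mul (inv (e ⋅ a)) (inv (e ⋅ b)).
  by exists (inv (e ⋅ a) ⋅ (e ⋅ a)); split; [exact: idem_l|].
have /nle_char h2 := nle_inv h1; rewrite !inv_inv in h2.
have hea : e ⋅ a = e ⋅ b.
  by rewrite h2 hp0 mulA he.
by rewrite hxe -!mulA hea.
Qed.

Lemma part1 J : Jclass mul J ->
  (RM_irreducible mul J <-> forall s, s \in J -> join_irreducible mul s).
Proof.
move=> hJ; split.
- move=> hRM s hs hred; apply: hRM => a b hN.
  have hJR : forall e, e \in J -> idem e -> JR e.
    by move=> e heJ he; apply: (JR_J hJ hs (JR_of_red hred)).
  have hN' : forall J', Jclass mul J' -> Jlt mul J' J -> rm_equiv mul J' b a.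
    move=> J' hJ' hlt x hx; have [h1 h2] := hN J' hJ' hlt x hx.
    split; first by split => /h1.
    by move=> u v; symmetry; apply: h2.
  move=> x hx; split; first split => h.
  + by rewrite (core hJ hJR hN hx h).
  + by rewrite (core hJ hJR hN' hx h).
  + by move=> ha _; rewrite (core hJ hJR hN hx ha).
- move=> hirr hH.
  have [s0 hs0] := hJ.
  have hs0J : s0 \in J by apply/hs0 => x.
  have he := idem_r s0.
  have heJ : s0 ⋅ inv s0 \in J.
    apply/(class_mem _ hJ hs0J)/Jrel_IS; split; first exact: IS_r.
    by move: (IS_r (s0 ⋅ inv s0) s0); rewrite regl.
  move: (s0 ⋅ inv s0) he heJ => e he heJ.
  apply: (hirr e heJ).
  exists [set y | (y == y ⋅ inv y ⋅ e) && (y != e)].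
  have hX : forall y, y \in [set y | (y == y ⋅ inv y ⋅ e) && (y != e)] -> nlt mul y e.
    move=> y; rewrite inE => /andP [/eqP h /eqP hne]; split => //.
    exact/nle_char.
  split => //; split; first by move=> y /hX [].
  move=> u hu.
  have hN : forall J', Jclass mul J' -> Jlt mul J' J -> rm_equiv mul J' e (e ⋅ u).
    move=> J' hJ' hlt; apply: rm_of_eq => x hx.
    have [hf hfe hxe] := lowf x he.
    have hne := not_top hJ hJ' hlt hx heJ he.
    have hfX : e ⋅ inv x ⋅ x ⋅ e \in [set y | (y == y ⋅ inv y ⋅ e) && (y != e)].
      rewrite inE; apply/andP; split; last by apply/eqP.
      by rewrite (inv_idem hf) hf -hfe.
    have hfu := proj1 (nle_idemP _ hf) (hu _ hfX).
    by rewrite mulA {2}hxe -mulA -hfu -hxe.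
  have [h1 h2] := hH e (e ⋅ u) hN e heJ.
  have hee : e ⋅ e \in J by rewrite he.
  have := h2 hee (proj1 h1 hee).
  rewrite mulA he => h; exists e; split => //.
Qed.

End Pf.

Theorem proposition2p12 (T : finType) (mul : T -> T -> T)
    (mulA : associative mul) (hinv : inverse_semigroup mul) :
  (forall J : {set T}, Jclass mul J ->
     (RM_irreducible mul J <-> forall s, s \in J -> join_irreducible mul s)) /\
  (forall J : {set T}, Jclass mul J ->
     forall e, e \in J -> idempotent_el mul e ->
     forall g, in_MJ mul J e g <->
       (Hrel mul g e /\ forall f, nlt mul f e -> nlt mul f g)).
Proof.
split.
- by move=> J hJ; apply: part1.
- by move=> J hJ e heJ he g; apply: part2.
Qed.
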